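(* Assume $\mathbb{E}\min(Z,W)=\infty$. Then, with probability one, $\liminf_{n\to\infty}\Lambda_n<\infty$.
   Context: Let $Z,W,(Z_n)_{n\ge1},(W_n)_{n\ge1}$ be independent, identically distributed random variables taking values in $\mathbb{N}=\{1,2,3,\dots\}$. Define sets $T_n\subset\mathbb{Z}$ recursively by $T_n=\{n\}$ for $n\le 0$ and $T_n=\{n\}\cup T_{n-Z_n}\cup T_{n-W_n}$ for $n\ge1$. Let $\mathcal{L}_n=T_n\cap\{0,-1,-2,\dots\}$ and $\Lambda_n=|\mathcal{L}_n|$. *)

(* Defs.v *)
From HB Require Import structures.
From mathcomp Require Import all_boot all_order all_algebra.
From mathcomp Require Import all_classical all_reals all_analysis.
Set Implicit Arguments. Unset Strict Implicit. Unset Printing Implicit Defensive.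
Import Order.TTheory GRing.Theory Num.Theory.
Local Open Scope classical_set_scope.
Local Open Scope ring_scope.

(* The whole family (Z, W, (Z_n)_{n>=1}, (W_n)_{n>=1}) indexed by bool * nat:
   (false,0) |-> Z, (true,0) |-> W, (false,n.+1) |-> Z_{n+1}, (true,n.+1) |-> W_{n+1}.
   (Zs 0 and Ws 0 are not part of the zw_family: they are unused.) *)
Definition zw_family {T : Type} (Z W : T -> nat) (Zs Ws : nat -> T -> nat)
  (i : bool * nat) : T -> nat :=
  match i with
  | (false, 0) => Z
  | (true, 0) => W
  | (false, n.+1) => Zs n.+1
  | (true, n.+1) => Ws n.+1
  end.

Definition discrete_rvs {d} {T : measurableType d} {I : Type}
  (X : I -> T -> nat) : Prop :=
  forall i k, measurable [set w | X i w = k].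

Definition mutually_independent {d} {T : measurableType d} {R : realType}
  (P : probability T R) {I : eqType} (X : I -> T -> nat) : Prop :=
  forall (J : seq I) (k : I -> nat), uniq J ->
    P (\bigcap_(j in [set` J]) [set w | X j w = k j]) =
    (\prod_(j <- J) P [set w | X j w = k j])%E.

Definition identically_distributed {d} {T : measurableType d} {R : realType}
  (P : probability T R) {I : Type} (X : I -> T -> nat) : Prop :=
  forall i j k, P [set w | X i w = k] = P [set w | X j w = k].

(* The sets T_n (for a fixed outcome, with z n = Z_n, w n = W_n), computed as a
   sequence of integers.
   Since z, w >= 1, fuel n suffices to compute T_n exactly. *)
Fixpoint T_aux (z w : nat -> nat) (fuel : nat) (m : int) : seq int :=
  if (m <= 0)%R then [:: m] else
  match fuel with
  | 0 => [::]
  | f.+1 => m :: (T_aux z w f (m - (z `|m|%N)%:Z) ++ T_aux z w f (m - (w `|m|%N)%:Z))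
  end.

Definition Tset (z w : nat -> nat) (n : nat) : seq int := T_aux z w n n%:Z.

Definition Lambda (z w : nat -> nat) (n : nat) : nat :=
  size (undup [seq m <- Tset z w n | (m <= 0)%R]).

(* Main.v *)
Require Import Defs.
From HB Require Import structures.
From mathcomp Require Import all_boot all_order all_algebra.
From mathcomp Require Import all_classical all_reals all_analysis.
From mathcomp Require Import lra measurable_realfun.
Import Order.TTheory GRing.Theory Num.Theory.
Local Open Scope classical_set_scope.
Local Open Scope ring_scope.

Lemma bigcap_cons (I : eqType) (U : Type) (F : I -> set U) j J :
  \bigcap_(i in [set` (j :: J)]) F i = F j `&` \bigcap_(i in [set` J]) F i.
Proof.
apply/seteqP; split => w /=.
  move=> H; split; first by apply: H; rewrite /= inE eqxx.
  by move=> i iJ; apply: H; rewrite /= inE iJ orbT.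
by move=> [Fj H] i; rewrite /= inE => /orP [/eqP->|/H].
Qed.

Lemma bigcap_nil (I : eqType) (U : Type) (F : I -> set U) :
  \bigcap_(i in [set` [::]]) F i = setT.
Proof. by rewrite set_nil bigcap_set0. Qed.

Section indep.
Local Open Scope ereal_scope.
Context d (T : measurableType d) (R : realType) (P : probability T R)
  (I : eqType) (V : countType) (X : I -> T -> V).
Hypothesis mX : forall i v, measurable [set w | X i w = v].

Definition piece i (S : set V) (k : nat) := [set w | S (X i w) /\ pickle (X i w) = k].

Lemma piece_cases S k : (exists v, forall i, piece i S k = [set w | X i w = v])
  \/ (forall i, piece i S k = set0).
Proof.
have [[v [Sv pv]]|nov] := pselect (exists v, S v /\ pickle v = k).
- left; exists v => i; apply/seteqP; split => w /=.
  + by move=> [_ pw]; apply: (pcan_inj (@pickleK V)); rewrite pw pv.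
  + by move=> eq; rewrite /piece /= eq.
- right => i; apply/seteqP; split => w //= [Sw pw]; apply: nov; by exists (X i w).
Qed.

Lemma piece_meas i S k : measurable (piece i S k).
Proof. by case: (piece_cases S k) => [[v ->]|->]. Qed.

Lemma preim_bigcup i S : [set w | S (X i w)] = \bigcup_k piece i S k.
Proof.
apply/seteqP; split => w /=; first by move=> Sw; exists (pickle (X i w)).
by move=> [k _ []].
Qed.

Lemma piece_triv i S (A : set T) : trivIset setT (fun k => piece i S k `&` A).
Proof. by move=> k l _ _ [w [[[_ pk] _] [[_ pl] _]]]; rewrite -pk -pl. Qed.

Lemma preim_meas i S : measurable [set w | S (X i w)].
Proof. rewrite preim_bigcup; apply: bigcupT_measurable => k; exact: piece_meas. Qed.

Lemma measure_pieces i S (A : set T) : measurable A ->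
  P ([set w | S (X i w)] `&` A) = \sum_(k <oo) P (piece i S k `&` A).
Proof.
move=> mA; rewrite preim_bigcup setI_bigcupl measure_semi_bigcup //.
- by move=> k; apply: measurableI => //; exact: piece_meas.
- exact: piece_triv.
- by rewrite -setI_bigcupl -preim_bigcup; apply: measurableI => //; exact: preim_meas.
Qed.

Lemma measure_pieces1 i S :
  P [set w | S (X i w)] = \sum_(k <oo) P (piece i S k).
Proof.
rewrite -[LHS](_ : P ([set w | S (X i w)] `&` setT) = _); last by rewrite setIT.
by rewrite measure_pieces //; apply: eq_eseriesr => k _; rewrite setIT.
Qed.

Hypothesis indep : forall (J : seq I) (k : I -> V), uniq J ->
  P (\bigcap_(j in [set` J]) [set w | X j w = k j]) =
  \prod_(j <- J) P [set w | X j w = k j].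

Lemma bigcap_meas (J : seq I) (F : I -> set T) : (forall j, measurable (F j)) ->
  measurable (\bigcap_(j in [set` J]) F j).
Proof.
move=> mF; elim: J => [|j J IH]; first by rewrite bigcap_nil.
by rewrite bigcap_cons; apply: measurableI.
Qed.

Lemma prod_fin (J : seq I) (F : I -> set T) : (forall j, measurable (F j)) ->
  \prod_(j <- J) P (F j) \is a fin_num.
Proof.
move=> mF; elim: J => [|j J IH]; first by rewrite big_nil.
by rewrite big_cons fin_numM // fin_num_measure.
Qed.

Lemma indep_gen (J M : seq I) (S : I -> set V) (k : I -> V) : uniq (J ++ M) ->
  P (\bigcap_(j in [set` J]) [set w | S j (X j w)] `&`
     \bigcap_(m in [set` M]) [set w | X m w = k m])
  = \prod_(j <- J) P [set w | S j (X j w)] * \prod_(m <- M) P [set w | X m w = k m].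
Proof.
elim: J M S k => [|j J IH] M S k /=.
  by move=> uM; rewrite bigcap_nil setTI big_nil mul1e indep.
move=> /andP [jJM uJM]; rewrite bigcap_cons -setIA.
set A := (\bigcap_(j0 in [set` J]) _ `&` _).
have mA : measurable A.
  by apply: measurableI; apply: bigcap_meas => i //; exact: preim_meas.
rewrite measure_pieces // big_cons -muleA.
set C := (\prod_(j0 <- J) _ * \prod_(m <- M) _)%E.
have Cfin : C \is a fin_num.
  by rewrite fin_numM // prod_fin // => i; first exact: preim_meas; exact: mX.
transitivity (\sum_(l <oo) ((fine C)%:E * P (piece j (S j) l))).
  apply: eq_eseriesr => l _; rewrite fineK //.
  case: (piece_cases (S j) l) => [[v ->]|->]; last first.
    by rewrite set0I measure0 mule0.
  have jM : j \notin M by move: jJM; rewrite mem_cat negb_or => /andP[].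
  have uJjM : uniq (J ++ j :: M).
    have := perm_catCA J [:: j] M (J ++ j :: M).
    by rewrite perm_refl => /esym /perm_uniq <-; rewrite /= jJM.
  have := IH (j :: M) S (fun i => if i == j then v else k i) uJjM.
  rewrite bigcap_cons big_cons eqxx.
  have eqM : \bigcap_(m in [set` M]) [set w | X m w = (if m == j then v else k m)]
           = \bigcap_(m in [set` M]) [set w | X m w = k m].
    apply/seteqP; split => w /= H m mM; have := H m mM;
      by rewrite ifN //; apply: contraNneq jM => <-.
  have eqP : \prod_(m <- M) P [set w | X m w = (if m == j then v else k m)]
           = \prod_(m <- M) P [set w | X m w = k m].
    rewrite big_seq [RHS]big_seq; apply: eq_bigr => m mM.
    by rewrite ifN //; apply: contraNneq jM => <-.
  rewrite eqM eqP setICA => ->.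
  by rewrite /C muleCA muleC.
rewrite nneseriesZl; last by move=> i _; exact: measure_ge0.
by rewrite -measure_pieces1 fineK // muleC.
Qed.

Lemma indep_sets (v0 : V) (J : seq I) (S : I -> set V) : uniq J ->
  P (\bigcap_(j in [set` J]) [set w | S j (X j w)]) =
  \prod_(j <- J) P [set w | S j (X j w)].
Proof.
move=> uJ; have := indep_gen J [::] S (fun _ => v0); rewrite cats0 => /(_ uJ).
by rewrite bigcap_nil setIT big_nil mule1.
Qed.

End indep.

Section ident.
Local Open Scope ereal_scope.
Context d (T : measurableType d) (R : realType) (P : probability T R)
  (I : eqType) (V : countType) (X : I -> T -> V).
Hypothesis mX : forall i v, measurable [set w | X i w = v].

Lemma ident_sets i j S : (forall v, P [set w | X i w = v] = P [set w | X j w = v]) ->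
  P [set w | S (X i w)] = P [set w | S (X j w)].
Proof.
move=> H; rewrite !(@measure_pieces1 _ _ _ P _ _ X mX); apply: eq_eseriesr => k _.
by case: (@piece_cases _ _ I V X S k) => [[v E]|E]; rewrite !E ?H.
Qed.

End ident.

Arguments preim_meas {d T I V X} mX i S.
Arguments indep_sets {d T R} P {I V X} mX indep v0 J S.
Arguments ident_sets {d T R} P {I V X} mX i j S.

Lemma T_aux_le0 z w f (m : int) : (m <= 0)%R -> T_aux z w f m = [:: m].
Proof. by case: f => [|f] /= ->. Qed.

Lemma Lambda_small z w n : (n < z n.+1)%N -> (n < w n.+1)%N ->
  (Lambda z w n.+1 <= 2)%N.
Proof.
move=> hz hw; rewrite /Lambda /Tset /=.
rewrite !T_aux_le0; last 2 first.
- by rewrite subr_le0 lez_nat.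
- by rewrite subr_le0 lez_nat.
rewrite /=.
apply: leq_trans (size_undup _) _.
by case: ifP => _; case: ifP.
Qed.

Lemma prod_bound (R : realType) (s : seq nat) (p : nat -> R) :
  (forall n, 0 <= p n <= 1) ->
  \prod_(n <- s) (1 - p n) * (1 + \sum_(n <- s) p n) <= 1.
Proof.
move=> hp; elim: s => [|n s IH]; first by rewrite !big_nil addr0 mulr1.
have A0 : 0 <= \prod_(n <- s) (1 - p n).
  by apply: prodr_ge0 => i _; have := hp i; rewrite subr_ge0 => /andP[].
have S0 : 0 <= \sum_(n <- s) p n.
  by apply: sumr_ge0 => i _; have /andP[] := hp i.
rewrite !big_cons.
move: IH A0 S0 (hp n); set A := \prod_(_ <- _) _; set S := \sum_(_ <- _) _.
move=> IH A0 S0 /andP[p0 p1].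
have h1 : 0 <= A * (p n * p n) by apply: mulr_ge0 => //; apply: mulr_ge0.
have h2 : 0 <= A * (p n * S) by apply: mulr_ge0 => //; apply: mulr_ge0.
nra.
Qed.

Lemma tail_big (R : realType) (p : nat -> R) : (forall n, 0 <= p n <= 1) ->
  (\sum_(n <oo) (p n)%:E = +oo)%E ->
  forall N (c : R), exists M, c <= \sum_(N <= n < M) p n.
Proof.
move=> hp hs N c; apply: contrapT => nM.
have hM : forall M, \sum_(N <= n < M) p n < c.
  by move=> M; rewrite ltNge; apply/negP => h; apply: nM; exists M.
have : (\sum_(n <oo) (p n)%:E <= (N%:R + c)%:E)%E.
  apply: lime_le; first by apply: is_cvg_nneseries => n _ _; rewrite lee_fin; have /andP[] := hp n.
  apply: nearW => M; rewrite sumEFin lee_fin.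
  have hle : \sum_(0 <= n < M) p n <= \sum_(0 <= n < N + M) p n.
    rewrite [X in _ <= X](big_cat_nat (n := M)) //=; last exact: leq_addl.
    by rewrite lerDl; apply: sumr_ge0 => i _; case/andP: (hp i).
  apply: le_trans hle _.
  rewrite (big_cat_nat (n := N)) //=; last exact: leq_addr.
  apply: lerD; last exact: ltW (le_lt_trans (lexx _) (hM (N + M)%N)).
  apply: le_trans (_ : \sum_(0 <= n < N) (1 : R) <= _).
    by apply: ler_sum => i _; case/andP: (hp i).
  by rewrite sumr_const_nat subn0.
by rewrite hs leNgt ltry.
Qed.

Theorem theorem2 (d : measure_display) (T : measurableType d) (R : realType)
  (P : probability T R) (Z W : T -> nat) (Zs Ws : nat -> T -> nat) :
  discrete_rvs (zw_family Z W Zs Ws) ->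
  mutually_independent P (zw_family Z W Zs Ws) ->
  identically_distributed P (zw_family Z W Zs Ws) ->
  (forall i w, (1 <= zw_family Z W Zs Ws i w)%N) ->
  (\int[P]_w ((minn (Z w) (W w))%:R : R)%:E = +oo)%E ->
  {ae P, forall w, (limn_einf (fun n => ((Lambda (fun k => Zs k w) (fun k => Ws k w) n)%:R : R)%:E) < +oo)%E}.
Proof.
move=> mX indX idX _ hint.
set X := zw_family Z W Zs Ws in mX indX idX.
pose Y n w := (Zs n.+1 w, Ws n.+1 w).
pose Rn n := [set ab : nat * nat | (n < ab.1)%N /\ (n < ab.2)%N].
pose B n := [set w | Rn n (Y n w)].
pose A n := [set w | (n < Z w)%N /\ (n < W w)%N].
have mXs : forall i (S : set nat), measurable [set w | S (X i w)] := preim_meas mX.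
have pairE : forall n (ab : nat * nat), [set w | Y n w = ab] =
    \bigcap_(i in [set` [:: (false, n.+1); (true, n.+1)]])
      [set w | X i w = (if i.1 then ab.2 else ab.1)].
  move=> n [a b]; rewrite !bigcap_cons bigcap_nil setIT.
  by apply/seteqP; split => w; rewrite /X /Y /=; [move=> [-> ->]|move=> [-> ->]].
have mY : forall n v, measurable [set w | Y n w = v].
  move=> n v; rewrite pairE !bigcap_cons bigcap_nil setIT.
  by apply: measurableI; apply: mX.
have indY : forall (J : seq nat) (k : nat -> nat * nat), uniq J ->
    P (\bigcap_(n in [set` J]) [set w | Y n w = k n]) =
    (\prod_(n <- J) P [set w | Y n w = k n])%E.
  move=> J k uJ.
  pose k' (i : bool * nat) := if i.1 then (k i.2.-1).2 else (k i.2.-1).1.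
  pose J' := [seq (false, n.+1) | n <- J] ++ [seq (true, n.+1) | n <- J].
  have uJ' : uniq J'.
    rewrite cat_uniq; apply/and3P; split.
    - by rewrite map_inj_uniq // => x y [].
    - by apply/hasPn => i /mapP [n _ ->]; apply/mapP => -[m _ []].
    - by rewrite map_inj_uniq // => x y [].
  have eqS : \bigcap_(n in [set` J]) [set w | Y n w = k n] =
             \bigcap_(i in [set` J']) [set w | X i w = k' i].
    apply/seteqP; split => w /= H.
      move=> i; rewrite /J' /= mem_cat => /orP [] /mapP [n nJ ->];
        by rewrite /X /k' /= -(H n nJ) /Y.
    move=> n nJ.
    have m1 : (false, n.+1) \in J'.
      by rewrite /J' mem_cat; apply/orP; left; apply/mapP; exists n.
    have m2 : (true, n.+1) \in J'.
      by rewrite /J' mem_cat; apply/orP; right; apply/mapP; exists n.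
    have h1 := H _ m1; have h2 := H _ m2.
    rewrite /X /k' /= in h1 h2.
    by rewrite /= /Y h1 h2; case: (k n).
  rewrite eqS indX // /J' big_cat /= !big_map -big_split /=.
  apply: eq_bigr => n _; rewrite pairE indX //= big_cons big_cons big_nil mule1.
  by [].
have hB : forall n, P (B n) = P (A n).
  move=> n; pose S : bool * nat -> set nat := fun _ => [set v | (n < v)%N].
  have e1 : B n = \bigcap_(i in [set` [:: (false, n.+1); (true, n.+1)]])
                    [set w | S i (X i w)].
    by rewrite !bigcap_cons bigcap_nil setIT.
  have e2 : A n = \bigcap_(i in [set` [:: (false, 0%N); (true, 0%N)]])
                    [set w | S i (X i w)].
    by rewrite !bigcap_cons bigcap_nil setIT.
  rewrite e1 e2 !(indep_sets P mX indX 0%N) // !big_cons !big_nil.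
  rewrite (ident_sets P mX (false, n.+1) (false, 0%N)) ?(ident_sets P mX (true, n.+1) (true, 0%N)) //.
have mA : forall n, measurable (A n).
  move=> n; apply: measurableI.
  - exact: (mXs (false, 0%N) [set v | (n < v)%N]).
  - exact: (mXs (true, 0%N) [set v | (n < v)%N]).
have hsumA : (\sum_(n <oo) P (A n) = +oo)%E.
  rewrite -hint.
  rewrite (eq_integral (fun w => (\sum_(n <oo) (\1_(A n) w)%:E)%E)).
    rewrite integral_nneseries //.
    - by apply: eq_eseriesr => n _; rewrite integral_indic // setIT.
    - by move=> n; apply/measurable_EFinP; exact: measurable_indic.
  move=> w _; set m := minn (Z w) (W w).
  rewrite (nneseries_split 0 m); last by move=> k _; rewrite lee_fin.
  rewrite add0n eseries0 ?adde0; last first.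
    move=> i mi _; rewrite indicE memNset //= => -[h1 h2].
    have : (i < m)%N by rewrite /m leq_min h1 h2.
    by rewrite ltnNge mi.
  rewrite sumEFin; congr (_%:E).
  rewrite big_nat_cond (eq_bigr (fun _ => 1)); last first.
    move=> i /andP [/andP [_ im] _]; rewrite indicE mem_set //.
    by move: im; rewrite /m leq_min => /andP[h1 h2].
  by rewrite -big_nat_cond sumr_const_nat subn0.
have hsum : (\sum_(n <oo) P (B n) = +oo)%E.
  by rewrite -hsumA; apply: eq_eseriesr => n _; exact: hB.
pose G N := \bigcap_(n in [set n | (N <= n)%N]) ~` B n.
have mB : forall n, measurable (B n) := fun n => preim_meas mY n (Rn n).
have mG : forall N, measurable (G N).
  by move=> N; apply: bigcap_measurableType => n _; exact: measurableC.
pose p n := fine (P (B n)).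
have PB : forall n, P (B n) = (p n)%:E.
  by move=> n; rewrite fineK // fin_num_measure.
have hp : forall n, 0 <= p n <= 1.
  by move=> n; rewrite -!lee_fin -PB measure_ge0 probability_le1.
have hps : (\sum_(n <oo) (p n)%:E = +oo)%E.
  by rewrite -hsum; apply: eq_eseriesr => n _; rewrite PB.
have bnd : forall N M, (P (G N) <= (\prod_(N <= n < M) (1 - p n))%:E)%E.
  move=> N M.
  apply: (@le_trans _ _ (P (\bigcap_(n in [set` index_iota N M]) [set w | (~` Rn n) (Y n w)]))).
    apply: le_measure; rewrite ?inE //.
      by apply: bigcap_meas => n; exact: (preim_meas mY n (~` Rn n)).
    move=> w Gw n; rewrite /= mem_index_iota => /andP [Nn _]; exact: Gw n Nn.
  rewrite (indep_sets P mY indY (0%N, 0%N) (index_iota N M) (fun n => ~` Rn n)) ?iota_uniq // -prodEFin.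
  rewrite le_eqVlt; apply/orP; left; apply/eqP; apply: eq_bigr => n _.
  by rewrite EFinB -PB -probability_setC.
have PG : forall N, P (G N) = 0%E.
  move=> N; apply/eqP; rewrite eq_le measure_ge0 andbT.
  have gE : P (G N) = (fine (P (G N)))%:E by rewrite fineK // fin_num_measure.
  rewrite gE lee_fin; set g := fine (P (G N)).
  rewrite leNgt; apply/negP => g0.
  have [M hM] := tail_big _ _ hp hps N (g^-1).
  have := bnd N M; rewrite gE lee_fin => hb.
  have := prod_bound _ (index_iota N M) p hp.
  set Q := \prod_(_ <- _) _; set S := \sum_(_ <- _) _.
  rewrite -/Q in hb; rewrite -/S in hM => hQ.
  have gg : g * g^-1 = 1 by rewrite mulfV // gt_eqF.
  have h1 : g * g^-1 <= g * S by rewrite ler_pM2l.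
  have S0 : 0 <= S by apply: le_trans hM; rewrite invr_ge0 ltW.
  have h2 : 0 <= (Q - g) * (1 + S) by apply: mulr_ge0; rewrite ?subr_ge0 //; lra.
  rewrite -/g in hb; move: hb hM hQ gg h1 S0 h2 g0.
  move: g Q S => g Q S; clear; move=> *; nra.
apply: (@negligibleS _ _ _ P (\bigcup_N G N)); last first.
  by apply: negligible_bigcup => N; exists (G N); split; [exact: mG|exact: PG|].
move=> w /= nQ; apply: contrapT => nG; apply: nQ.
have hN : forall N, exists n, (N <= n)%N /\ B n w.
  move=> N; apply: contrapT => H; apply: nG; exists N => // n Nn Bn.
  by apply: H; exists n.
rewrite limn_einf_lim; apply: (@le_lt_trans _ _ 2%:E); last by rewrite ltry.
apply: lime_le; first exact: is_cvg_einfs.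
apply: nearW => N; have [n [Nn [h1 h2]]] := hN N.
apply: (@le_trans _ _ (((Lambda (fun k => Zs k w) (fun k => Ws k w) n.+1)%:R)%:E)).
  apply: ereal_inf_lbound; exists n.+1 => //=; exact: leqW.
by rewrite lee_fin ler_nat; apply: Lambda_small.
Qed.
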